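(* Consider a sequential team with a classical information structure such that additionally $\sigma(\omega_0)\subset\sigma(y^1)$. Suppose $\prod_k(\mathbb{Y}^k\times\mathbb{U}^k)$ is compact, the loss $c(\omega_0,\mathbf{u})$ is lower semi-continuous, and each measurement kernel $p_n$ is weakly continuous, i.e., $\int f(y^n)p_n(dy^n|\omega_0,u^1,\dots,u^{n-1})$ is continuous in $(\omega_0,u^1,\dots,u^{n-1})$ for every continuous and bounded $f$. Then there exists an optimal team policy which is deterministic.
   Context: Sequential team: DMs act in order $1,\dots,N$; DM $n$ observes $y^n=\eta^n(\omega,u^1,\dots,u^{n-1})\in\mathbb{Y}^n$ and chooses $u^n=\gamma^n(y^n)\in\mathbb{U}^n$ with $\gamma^n$ measurable; all spaces are standard Borel; $\omega_0$ is the cost-relevant exogenous variable and the cost is $J(\underline{\gamma})=E[c(\omega_0,\mathbf{u})]$ with $c\ge0$ measurable. The kernel $p_n$ is defined by $p_n(y^n\in\cdot|\omega_0,u^1,\dots,u^{n-1})=P(\eta^n(\omega,u^1,\dots,u^{n-1})\in\cdot\,|\,\omega_0,u^1,\dots,u^{n-1})$. The information structure is classical if $y^i$ contains all information available to DM $k$ for every $k<i$. An optimal policy attains $\inf_{\underline{\gamma}}J(\underline{\gamma})$. *)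

(* Defs.v *)
From HB Require Import structures.
From mathcomp Require Import all_boot all_order all_algebra.
From mathcomp Require Import all_classical all_reals all_analysis.
From mathcomp Require Import measurable_realfun.
Import numFieldNormedType.Exports.

Set Implicit Arguments.
Unset Strict Implicit.
Unset Printing Implicit Defensive.

Import Order.TTheory GRing.Theory Num.Theory.
Local Open Scope classical_set_scope.
Local Open Scope ring_scope.

HB.instance Definition _ (I : Type) (T : I -> ptopologicalType) :=
  Pointed.copy (prod_topology T) (forall i, T i).

Definition borelT (T : ptopologicalType) := g_sigma_algebraType (@open T).

Definition polish {R : realType} (T : completePseudoMetricType R) : Prop :=
  hausdorff_space T /\ exists D : set T, countable D /\ closure D = setT.

(** sigma(f) is contained in sigma(g), for f, g defined on the same
    measurable space: every f-preimage of a measurable set is a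
    g-preimage of a measurable set. *)
Definition sigma_sub {dS dA dB} {S : measurableType dS}
  {A : measurableType dA} {B : measurableType dB} (f : S -> A) (g : S -> B) :=
  forall E : set A, measurable E ->
    exists F : set B, measurable F /\ f @^-1` E = g @^-1` F.

(** The joint action vector (u^1,...,u^N) generated by the team policy
    gamma at the sample point omega: the solution of
    u^n = gamma^n (eta^n (omega, u^1..u^{n-1})), computed by N+1 rounds of
    substitution (since eta^n only depends on u^k, k < n, this yields the
    unique solution). *)
Definition team_action {N : nat} {Omega : Type}
  (Y U : 'I_N.+1 -> ptopologicalType)
  (eta : forall n : 'I_N.+1, Omega -> (forall k : 'I_N.+1, U k) -> Y n)
  (gamma : forall n : 'I_N.+1, Y n -> U n) (omega : Omega) :
  forall k : 'I_N.+1, U k :=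
  iter N.+1 (fun v k => gamma k (eta k omega v)) (fun k => @point (U k)).

Definition policy_measurable {N : nat} (Y U : 'I_N.+1 -> ptopologicalType)
  (gamma : forall n : 'I_N.+1, Y n -> U n) :=
  forall n : 'I_N.+1,
    measurable_fun setT (gamma n : borelT (Y n) -> borelT (U n)).

Definition team_cost {R : realType} {N : nat} {dO} {Omega : measurableType dO}
  (P : probability Omega R) (X0 : ptopologicalType)
  (Y U : 'I_N.+1 -> ptopologicalType)
  (w0 : Omega -> X0)
  (eta : forall n : 'I_N.+1, Omega -> (forall k : 'I_N.+1, U k) -> Y n)
  (c : (X0 * prod_topology U)%type -> \bar R)
  (gamma : forall n : 'I_N.+1, Y n -> U n) : \bar R :=
  (\int[P]_omega c (w0 omega, team_action eta gamma omega))%E.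

(* Main.v *)
Require Import Defs.
From HB Require Import structures.
From mathcomp Require Import all_boot all_order all_algebra.
From mathcomp Require Import all_classical all_reals all_analysis.
From mathcomp Require Import measurable_realfun.
Import numFieldNormedType.Exports.
Import Order.TTheory GRing.Theory Num.Theory.
Local Open Scope classical_set_scope.
Local Open Scope ring_scope.
From mathcomp Require Import zify.
Definition capp (s : seq bool) (t : cantor_space) : cantor_space :=
  fun n => if (n < size s)%N then nth false s n else t (n - size s)%N.

Lemma cantor_ptws (F : set_system cantor_space) (f : cantor_space) :
  Filter F -> (F --> f) <-> forall i : nat, (fun g : cantor_space => g i) @ F --> f i.
Proof.
move=> FF. exact: (@pointwise_cvgP nat bool F f FF).
Qed.

Lemma cantor_proj_cvg (t : cantor_space) (j : nat) :
  (fun g : cantor_space => g j) @ nbhs t --> t j.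
Proof. exact: ((cantor_ptws (nbhs t) t _).1 cvg_id j). Qed.

Lemma capp_cont s : continuous (capp s).
Proof.
move=> t; apply/cantor_ptws => i.
rewrite /capp; case: ltnP => hi.
  move=> A /nbhs_singleton HA.
  have : nbhs t setT by exact: filterT.
  apply: filterS => x _ /=; by rewrite hi.
move=> A /(cantor_proj_cvg t (i - size s)%N) HA /=.
move: HA; rewrite !nbhs_simpl /=; apply: filterS => x /=; by rewrite ltnNge hi.
Qed.

Lemma cyl_nbhs (z : cantor_space) (W : set cantor_space) : nbhs z W ->
  exists n, forall t : cantor_space, (forall i, (i < n)%N -> t i = z i) -> W t.
Proof.
move=> Wz; apply: contrapT => /forallNP H.
have H' : forall n, exists t : cantor_space, (forall i, (i < n)%N -> t i = z i) /\ ~ W t.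
  move=> n; have /existsNP[t /not_implyP[h1 h2]] := H n; by exists t.
have [tn htn] := choice H'.
have cv : tn @ \oo --> z.
  apply/cantor_ptws => i A /nbhs_singleton HA; rewrite !nbhs_simpl /=.
  exists i.+1 => // n /= hn; by rewrite (htn n).1.
have := cv W Wz; rewrite !nbhs_simpl /= => -[n _ hn].
by have := (htn n).2; apply; apply: hn => /=.
Qed.

Definition ccons (b : bool) (t : cantor_space) : cantor_space :=
  fun n => if n is k.+1 then t k else b.

Lemma capp_rcons s b t : capp (rcons s b) t = capp s (ccons b t).
Proof.
apply/funext => n; rewrite /capp size_rcons nth_rcons.
case: (ltngtP n (size s)) => h.
- by have -> : (n < (size s).+1)%N by lia.
- have -> : (n < (size s).+1)%N = false by lia.
  rewrite /ccons.
  have -> : (n - size s)%N = (n - (size s).+1).+1 by lia.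
  by [].
- by rewrite h ltnSn subnn.
Qed.

Lemma capp_split s (t : cantor_space) :
  capp s t = capp (rcons s (t 0%N)) (fun n => t n.+1).
Proof.
rewrite capp_rcons; congr capp; apply/funext => -[|n] //.
Qed.

Lemma capp_nil (t : cantor_space) : capp [::] t = t.
Proof. by apply/funext => n; rewrite /capp /= subn0. Qed.

Lemma real_between {R : realType} (a : R) (e : \bar R) : (a%:E < e)%E ->
  exists a' : R, a < a' /\ (a'%:E < e)%E.
Proof.
case: e => [r| |] //=.
- rewrite lte_fin => h; exists ((a + r) / 2); split.
  + by rewrite ltr_pdivlMr // mulrDr mulr1 ltrD2l.
  + by rewrite lte_fin ltr_pdivrMr // mulrDr mulr1 ltrD2r.
- move=> _; exists (a + 1); split; [by rewrite ltrDl | exact: ltry].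
Qed.

Lemma lsc_comp {R : realType} {T1 T2 : topologicalType} (f : T2 -> \bar R)
  (h : T1 -> T2) : lower_semicontinuous f -> continuous h ->
  lower_semicontinuous (f \o h).
Proof.
move=> hf hc x a /hf[V nV HV]; exists (h @^-1` V); last by move=> y /HV.
exact: hc _ _ nV.
Qed.

Lemma lsc_measurable {R : realType} {X : ptopologicalType} (f : X -> \bar R) :
  lower_semicontinuous f -> measurable_fun setT (f : borelT X -> \bar R).
Proof.
move=> hf; apply: (measurability _ (ErealGenOInfty.measurableE R)).
move=> /= _ [_ [a ->]] <-; apply: measurableI => //.
apply: sub_sigma_algebra; rewrite preimage_itvoy.
by move/lower_semicontinuousP : hf; apply.
Qed.

Lemma meas_seq_pred {d} {T : measurableType d} (f : T -> seq bool)
  (P : seq bool -> Prop) :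
  (forall s, measurable [set x | f x = s]) -> measurable [set x | P (f x)].
Proof.
move=> hf.
pose F k := match @unpickle (seq bool) k with
            | Some s => [set x | f x = s /\ P s] | None => set0 end.
rewrite (_ : [set x | P (f x)] = \bigcup_k F k).
  apply: bigcupT_measurable => k; rewrite /F; case: (unpickle k) => [s|//].
  rewrite (_ : [set x | f x = s /\ P s] = [set x | f x = s] `&` [set _ | P s]).
    apply: measurableI; first exact: hf.
    by case: (pselect (P s)) => h; [rewrite (_ : [set _ | P s] = setT) |
      rewrite (_ : [set _ | P s] = set0)] => //; apply/seteqP; split.
  by apply/seteqP; split => x.
apply/seteqP; split => x /=.
  by move=> Px; exists (pickle (f x)) => //; rewrite /F pickleK.
by move=> [k _]; rewrite /F; case: (unpickle k) => [s [-> //]|].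
Qed.

Section Selection.
Context {R : realType} {X : ptopologicalType}
  (g : (X * cantor_space)%type -> \bar R) (hg : lower_semicontinuous g).
Local Open Scope ereal_scope.

Definition msel s x := ereal_inf [set g (x, capp s t) | t in [set: cantor_space]].

Lemma msel_le s b x : msel s x <= msel (rcons s b) x.
Proof.
rewrite /msel; apply: ereal_inf_le_tmp => _ [t _ <-].
by exists (ccons b t) => //; rewrite capp_rcons.
Qed.

Lemma msel_ge s x (b : bool) :
  (forall b', msel (rcons s b) x <= msel (rcons s b') x) ->
  msel (rcons s b) x <= msel s x.
Proof.
move=> H; apply: le_ereal_inf_tmp => _ [t _ <-].
apply: le_trans (H (t 0%N)) _; rewrite capp_split.
by apply: ereal_inf_lbound; exists (fun n => t n.+1).
Qed.

Definition bit s x := ~~ (msel (rcons s false) x <= msel (rcons s true) x).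

Lemma bit_min s x b' : msel (rcons s (bit s x)) x <= msel (rcons s b') x.
Proof.
rewrite /bit; have [h|h] := leP (msel (rcons s false) x) (msel (rcons s true) x);
  case: b' => //=; exact: ltW.
Qed.

Fixpoint pre n x := if n is k.+1 then rcons (pre k x) (bit (pre k x) x) else [::].

Lemma size_pre n x : size (pre n x) = n.
Proof. by elim: n => //= n ih; rewrite size_rcons ih. Qed.

Lemma pre_inv n x : msel (pre n x) x = msel [::] x.
Proof.
elim: n => //= n <-; apply/eqP; rewrite eq_le msel_ge ?msel_le //.
exact: bit_min.
Qed.

Definition zsel x : cantor_space := fun n => nth false (pre n.+1 x) n.

Lemma zsel_bit n x : zsel x n = bit (pre n x) x.
Proof. by rewrite /zsel /= nth_rcons size_pre ltnn eqxx. Qed.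

Lemma nth_pre n x i : (i < n)%N -> nth false (pre n x) i = zsel x i.
Proof.
elim: n => // n ih hi /=; rewrite nth_rcons size_pre.
case: (ltngtP i n) => h; first by rewrite ih.
- by lia.
- by rewrite h -zsel_bit.
Qed.

Lemma msel_lb x t : msel [::] x <= g (x, t).
Proof. by apply: ereal_inf_lbound; exists t => //; rewrite capp_nil. Qed.

Lemma zsel_opt x : g (x, zsel x) = msel [::] x.
Proof.
apply/eqP; rewrite eq_le msel_lb andbT leNgt; apply/negP => hlt.
have [a [h1 h2]] : exists a : R, msel [::] x < a%:E /\ a%:E < g (x, zsel x).
  move: hlt; case E: (msel [::] x) => [r| |] //.
  - by move=> /real_between[a' [? ?]]; exists a'; rewrite lte_fin.
  - by rewrite ltNge leey.
  - case: (g (x, zsel x)) => [r| |] // _.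
    + by exists (r - 1)%R; rewrite ltNyr lte_fin ltrBlDr ltrDl.
    + by exists 0%R; rewrite ltNyr ltry.
have [V nV HV] := hg _ _ h2.
case: nV => -[A B] /= [nA nB] AB.
have [n hn] := cyl_nbhs _ _ nB.
have : a%:E <= msel (pre n x) x.
  apply: le_ereal_inf_tmp => _ [t _ <-]; apply: ltW; apply: HV; apply: (AB (x, _)).
  split => //=; first exact: nbhs_singleton.
  apply: hn => i hi; by rewrite /capp size_pre hi nth_pre.
by rewrite pre_inv leNgt h1.
Qed.

Lemma msel_lsc s : lower_semicontinuous (msel s).
Proof.
pose h := fun p : (X * cantor_space)%type => (p.1, capp s p.2).
pose G := g \o h.
have hG : lower_semicontinuous G.
  apply: lsc_comp hg _ => -[x t].
  have H2 : (fun p : (X * cantor_space)%type => capp s p.2) @ nbhs (x, t) --> capp s t.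
    have := @continuous_comp _ _ _ snd (capp s) (x, t) cvg_snd (capp_cont s t).
    by move=> /(_ (nbhs_filter x)).
  exact: (@cvg_pair _ _ _ (nbhs (x,t)) (nbhs x) (nbhs (capp s t)) _ _ _ fst
    (fun p => capp s p.2) cvg_fst H2).
move=> x0 a ha; have [a' [aa' ha']] := @real_between _ _ _ ha.
have Hcov := (compact_near_coveringP _).1 cantor_space_compact X (nbhs x0)
  (fun x t => a'%:E < G (x, t)) (nbhs_filter x0).
have nV : \forall x \near x0, [set: cantor_space] `<=` (fun t => a'%:E < G (x, t)).
  apply: Hcov => t _.
  have : a'%:E < G (x0, t).
    apply: lt_le_trans ha' _; apply: ereal_inf_lbound; by exists t.
  move=> /hG[V nV HV]; case: nV => -[A B] /= [nA nB] AB.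
  exists (B, A) => //= -[t' x'] /= [Bt Ax]; apply: HV; exact: (AB (x', t')).
exists [set x | [set: cantor_space] `<=` (fun t => a'%:E < G (x, t))] => // y Vy.
apply: (@lt_le_trans _ _ a'%:E); first by rewrite lte_fin.
apply: le_ereal_inf_tmp => _ [t _ <-]; apply: ltW; exact: (Vy t).
Qed.

Lemma msel_meas s : measurable_fun setT (msel s : borelT X -> \bar R).
Proof. exact: lsc_measurable (msel_lsc s). Qed.

Lemma bit_meas s b : measurable [set x : borelT X | bit s x = b].
Proof.
have M := measurable_lee measurableT (msel_meas (rcons s false)) (msel_meas (rcons s true)).
rewrite setTI in M.
case: b.
- rewrite (_ : [set x | bit s x = true] =
     ~` [set x : borelT X | msel (rcons s false) x <= msel (rcons s true) x]).
    exact: measurableC.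
  by apply/seteqP; split => x /=; rewrite /bit; case: (_ <= _).
- rewrite (_ : [set x | bit s x = false] =
     [set x : borelT X | msel (rcons s false) x <= msel (rcons s true) x]) //.
  by apply/seteqP; split => x /=; rewrite /bit; case: (_ <= _).
Qed.

Lemma pre_fiber n s : measurable [set x : borelT X | pre n x = s].
Proof.
elim: n s => [|n ih] s /=.
  case: s => [|b s]; first by rewrite (_ : [set _ | _] = setT) //; apply/seteqP; split.
  by rewrite (_ : [set _ | _] = set0) //; apply/seteqP; split.
case/lastP: s => [|s b].
  rewrite (_ : [set _ | _] = set0) //; apply/seteqP; split => x //=.
  by case: (pre n x) => [|? ?].
rewrite (_ : [set _ | _] = [set x : borelT X | pre n x = s] `&` [set x | bit s x = b]).
  by apply: measurableI; [exact: ih | exact: bit_meas].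
apply/seteqP; split => x /=.
  by move=> /eqP; rewrite eqseq_rcons => /andP[/eqP -> /eqP ->].
by move=> [-> <-].
Qed.

Lemma zsel_meas n : measurable [set x : borelT X | zsel x n].
Proof.
exact: (@meas_seq_pred _ (borelT X) (fun x => pre n.+1 x) (fun s => is_true (nth false s n)) (pre_fiber n.+1)).
Qed.

End Selection.

Lemma prod_continuous {I : eqType} {T : topologicalType} {K : I -> topologicalType}
  (f : T -> prod_topology K) : (forall i, continuous (fun x => f x i)) -> continuous f.
Proof.
move=> hf x; apply/cvg_sup.
move=> i; move: x; apply/(@continuousP _ (initial_topology (@^~ i))) => A [B oB <-].
exact: ((continuousP _).1 (hf i) B oB).
Qed.

Lemma cantor_prod_surj {R : realType} {N : nat} (V : 'I_N.+1 -> pseudoPMetricType R) :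
  (forall k, compact [set: V k]) -> (forall k, hausdorff_space (V k)) ->
  exists Phi : cantor_space -> prod_topology (fun k => V k : ptopologicalType),
    continuous Phi /\ forall u, exists t, Phi t = u.
Proof.
move=> hc hh.
have hphi : forall k, exists phi : cantor_space -> V k,
    continuous phi /\ forall v, exists t, phi t = v.
  move=> k; have [f cf] := cantor_surj (hc k) (hh k).
  exists f; split => // v; have [t _ <-] := @surj _ _ _ _ f v I; by exists t.
pose phi k := projT1 (cid (hphi k)).
have hp k : continuous (phi k) /\ forall v, exists t, phi k t = v := projT2 (cid (hphi k)).
exists (fun t k => phi k (fun n => t (n * N.+1 + k)%N)); split.
  apply: prod_continuous => k.
  pose rf := fun t : cantor_space => (fun n => t (n * N.+1 + k)%N) : cantor_space.
  move=> t; apply: (@continuous_comp _ _ _ rf (phi k) t); last exact: (hp k).1.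
  apply/cantor_ptws => n; exact: cantor_proj_cvg.
move=> u.
have hu : forall k, exists t, phi k t = u k by move=> k; exact: (hp k).2.
have [tk htk] := choice hu.
exists (fun m => tk (inord (m %% N.+1)) (m %/ N.+1)%N).
apply: functional_extensionality_dep => k /=; rewrite -[RHS]htk; congr (phi k _).
apply/funext => n.
have -> : ((n * N.+1 + k) %% N.+1 = k)%N by rewrite modnMDl modn_small.
have -> : ((n * N.+1 + k) %/ N.+1 = n)%N by rewrite divnMDl // divn_small // addn0.
by rewrite inord_val.
Qed.

Lemma bits_preimage_meas {d} {T : measurableType d} (beta : T -> cantor_space)
  (W : set cantor_space) :
  (forall n, measurable [set y | beta y n]) -> open W ->
  measurable (beta @^-1` W).
Proof.
move=> hb oW.
have hbb : forall n b, measurable [set y | beta y n = b].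
  move=> n [].
    by rewrite (_ : [set y | _ = true] = [set y | beta y n]) //; apply/seteqP; split.
  rewrite (_ : [set y | _ = false] = ~` [set y | beta y n]); first exact: measurableC.
  by apply/seteqP; split => y /=; case: (beta y n).
have hfib : forall n s, measurable [set y | mkseq (beta y) n = s].
  elim=> [|n ih] s.
    case: s => [|b s]; first by rewrite (_ : [set _ | _] = setT) //; apply/seteqP; split.
    by rewrite (_ : [set _ | _] = set0) //; apply/seteqP; split.
  case/lastP: s => [|s b].
    rewrite (_ : [set _ | _] = set0) //; apply/seteqP; split => [y /= H|//].
    by have := congr1 size H; rewrite size_mkseq.
  rewrite (_ : [set _ | _] = [set y | mkseq (beta y) n = s] `&` [set y | beta y n = b]).
    by apply: measurableI; [exact: ih | exact: hbb].
  apply/seteqP; split => y /=.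
    by rewrite mkseqS => /eqP; rewrite eqseq_rcons => /andP[/eqP -> /eqP ->].
  by move=> [<- <-]; rewrite mkseqS.
pose P n (s : seq bool) := forall t : cantor_space,
  (forall i, (i < n)%N -> t i = nth false s i) -> W t.
rewrite (_ : beta @^-1` W = \bigcup_n [set y | P n (mkseq (beta y) n)]).
  apply: bigcupT_measurable => n.
  exact: (@meas_seq_pred _ T (fun y => mkseq (beta y) n) (P n) (hfib n)).
apply/seteqP; split => y /=.
  move=> Wy; have : nbhs (beta y) W by apply: open_nbhs_nbhs; split.
  move=> /cyl_nbhs[n hn]; exists n => // t ht; apply: hn => i hi.
  by rewrite ht // nth_mkseq.
move=> [n _ hn]; apply: hn => i hi; by rewrite nth_mkseq.
Qed.

Lemma le_int_ge0 {d} {T : measurableType d} {R : realType} (mu : measure T R)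
  (f g : T -> \bar R) : (forall x, (0 <= f x)%E) -> (forall x, (f x <= g x)%E) ->
  (\int[mu]_x f x <= \int[mu]_x g x)%E.
Proof.
move=> f0 fg; rewrite !ge0_integralTE //; last by move=> x; exact: le_trans (f0 x) (fg x).
apply: ereal_sup_le => _ [h hf <-]; exists h => //= x.
exact: le_trans (hf x) (fg x).
Qed.

Theorem mainTheorem5
  (R : realType) (N : nat)
  (* the underlying probability space *)
  (dO : measure_display) (Omega : measurableType dO) (P : probability Omega R)
  (* standard Borel (Polish) spaces: omega_0, measurements y^n, actions u^n;
     DMs are indexed by 'I_N.+1, i.e. 0 (= DM 1), ..., N (= DM N+1) *)
  (X0 : completePseudoMetricType R)
  (Y U : 'I_N.+1 -> completePseudoMetricType R)
  (hX0 : polish X0) (hY : forall n, polish (Y n)) (hU : forall n, polish (U n))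
  (* cost-relevant exogenous variable omega_0 *)
  (w0 : Omega -> X0)
  (mw0 : measurable_fun setT (w0 : Omega -> borelT X0))
  (* measurement maps y^n = eta^n(omega, u^1, ..., u^{n-1}) *)
  (eta : forall n : 'I_N.+1,
     Omega -> prod_topology (fun k => U k : ptopologicalType) -> Y n)
  (meta : forall n : 'I_N.+1,
     measurable_fun setT
       (fun p : (Omega * borelT (prod_topology (fun k => U k : ptopologicalType)))%type =>
          (eta n p.1 p.2 : borelT (Y n))))
  (eta_causal : forall (n : 'I_N.+1) omega u u',
     (forall k : 'I_N.+1, (k < n)%N -> u k = u' k) -> eta n omega u = eta n omega u')
  (* cost *)
  (c : (X0 * prod_topology (fun k => U k : ptopologicalType))%type -> \bar R)
  (c_ge0 : forall z, (0 <= c z)%E)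
  (c_meas : measurable_fun setT
     (fun z : (borelT X0 * borelT (prod_topology (fun k => U k : ptopologicalType)))%type =>
          c z))
  (* classical information structure: sigma(y^k) is contained in sigma(y^i)
     for k < i (as sigma-fields on Omega x (action space)) *)
  (classical : forall k i : 'I_N.+1, (k < i)%N ->
     sigma_sub
       (fun p : (Omega * borelT (prod_topology (fun k => U k : ptopologicalType)))%type =>
          (eta k p.1 p.2 : borelT (Y k)))
       (fun p : (Omega * borelT (prod_topology (fun k => U k : ptopologicalType)))%type =>
          (eta i p.1 p.2 : borelT (Y i))))
  (* sigma(omega_0) is contained in sigma(y^1) *)
  (w0_y1 :
     sigma_sub
       (fun p : (Omega * borelT (prod_topology (fun k => U k : ptopologicalType)))%type =>
          (w0 p.1 : borelT X0))
       (fun p : (Omega * borelT (prod_topology (fun k => U k : ptopologicalType)))%type =>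
          (eta ord0 p.1 p.2 : borelT (Y ord0))))
  (* prod_k (Y^k x U^k) is compact *)
  (hcompact : compact
     [set: prod_topology (fun k => ((Y k * U k)%type : topologicalType))])
  (* c is lower semicontinuous *)
  (c_lsc : lower_semicontinuous c)
  (* measurement kernels p_n(dy^n | omega_0, u^1, ..., u^{n-1}) *)
  (p : forall n : 'I_N.+1,
     X0 -> prod_topology (fun k => U k : ptopologicalType) ->
     probability (borelT (Y n)) R)
  (p_causal : forall (n : 'I_N.+1) x u u',
     (forall k : 'I_N.+1, (k < n)%N -> u k = u' k) -> p n x u = p n x u')
  (p_meas : forall (n : 'I_N.+1) (A : set (borelT (Y n))), measurable A ->
     measurable_fun setT
       (fun xu : (borelT X0 * borelT (prod_topology (fun k => U k : ptopologicalType)))%type =>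
          p n xu.1 xu.2 A))
  (* p_n(. | omega_0, u) is a version of P(eta^n(omega, u) \in . | omega_0) *)
  (p_cond : forall (n : 'I_N.+1) (u : prod_topology (fun k => U k : ptopologicalType))
       (A : set (borelT (Y n))) (B : set (borelT X0)),
     measurable A -> measurable B ->
     P [set omega | B (w0 omega) /\ A (eta n omega u)] =
     (\int[P]_(omega in w0 @^-1` B) p n (w0 omega) u A)%E)
  (* weak continuity of the kernels *)
  (p_weak : forall (n : 'I_N.+1) (f : Y n -> R),
     continuous f -> (exists M : R, forall y, `|f y| <= M) ->
     continuous
       (fun xu : (X0 * prod_topology (fun k => U k : ptopologicalType))%type =>
          (\int[p n xu.1 xu.2]_y (f y)%:E)%E)) :
  exists gamma : forall n : 'I_N.+1, Y n -> U n,
    @policy_measurable N (fun n => Y n : ptopologicalType)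
      (fun n => U n : ptopologicalType) gamma /\
    forall gamma' : forall n : 'I_N.+1, Y n -> U n,
      @policy_measurable N (fun n => Y n : ptopologicalType)
        (fun n => U n : ptopologicalType) gamma' ->
      (team_cost P w0 eta c gamma <= team_cost P w0 eta c gamma')%E.
Proof.
have hcU : forall k, compact [set: U k].
  move=> k.
  have -> : [set: U k] = (fun f : prod_topology (fun k => ((Y k * U k)%type : topologicalType)) => (f k).2) @` [set: _].
    apply/seteqP; split => u // _.
    exists (dfwith (fun j => ((point : Y j), (point : U j))) k (point, u)) => //.
    by rewrite dfwithin.
  apply: continuous_compact => //; apply: continuous_subspaceT => f.
  apply: (@continuous_comp _ _ _ (fun f : prod_topology (fun k => ((Y k * U k)%type : topologicalType)) => f k) snd f).
    exact: proj_continuous.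
  exact: cvg_snd.
have [Phi [cPhi sPhi]] := @cantor_prod_surj R N (fun k => (U k : pseudoPMetricType R)) hcU (fun k => (hU k).1).
pose h := fun p : (X0 * cantor_space)%type =>
  (p.1, Phi p.2) : (X0 * prod_topology (fun k => U k : ptopologicalType))%type.
pose g := c \o h.
have hg : lower_semicontinuous g.
  apply: lsc_comp c_lsc _ => -[x t].
  have H2 : (fun p : (X0 * cantor_space)%type => Phi p.2) @ nbhs (x, t) --> Phi t.
    have := @continuous_comp _ _ _ snd Phi (x, t) cvg_snd (cPhi t).
    by move=> /(_ (nbhs_filter x)).
  exact: (@cvg_pair _ _ _ (nbhs (x,t)) (nbhs x) (nbhs (Phi t)) _ _ _ fst
    (fun p => Phi p.2) cvg_fst H2).
pose z := zsel g.
have hB : forall n, measurable [set x : borelT X0 | z x n].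
  by move=> n; apply: zsel_meas; exact: hg.
have HF : forall (k : 'I_N.+1) n, exists F : set (borelT (Y k)), measurable F /\
    forall omega u, (z (w0 omega) n : Prop) = F (eta k omega u).
  move=> k n; have [F0 [mF0 E0]] := w0_y1 _ (hB n).
  have E0' : forall omega u, (z (w0 omega) n : Prop) = F0 (eta ord0 omega u).
    by move=> omega u; exact: (congr1 (fun S => S (omega, u)) E0).
  have [k0|kpos] := eqVneq (k : nat) 0%N.
    have -> : k = ord0 by apply: val_inj.
    by exists F0.
  have kp : (0 < k)%N by rewrite lt0n.
  have [F1 [mF1 E1]] := classical ord0 k kp F0 mF0.
  exists F1; split => // omega u; rewrite (E0' omega u).
  exact: (congr1 (fun S => S (omega, u)) E1).
pose F k n := projT1 (cid (HF k n)).
have hF : forall k n, measurable (F k n) /\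
    forall omega u, (z (w0 omega) n : Prop) = F k n (eta k omega u).
  by move=> k n; exact: (projT2 (cid (HF k n))).
pose gamma := fun k (y : Y k) => Phi (fun n => `[< F k n y >]) k.
have key : forall k omega u, gamma k (eta k omega u) = Phi (z (w0 omega)) k.
  move=> k omega u; rewrite /gamma; congr (Phi _ k); apply/funext => n.
  by rewrite -(hF k n).2 asboolb.
have hta : forall omega, team_action eta gamma omega = Phi (z (w0 omega)).
  move=> omega; rewrite /team_action iterS.
  apply: functional_extensionality_dep => k; exact: key.
exists gamma; split.
  move=> k.
  have := @measurability _ _ (borelT (Y k)) (borelT (U k)) setT (gamma k) (@open (U k)) erefl. apply.
  move=> _ [V0 hO <-]; rewrite setTI.
  pose beta := fun y : borelT (Y k) => (fun n => `[< F k n y >]) : cantor_space.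
  have -> : gamma k @^-1` V0 = beta @^-1` [set t | V0 (Phi t k)] by [].
  apply: bits_preimage_meas.
    move=> n; rewrite (_ : [set y | beta y n] = F k n); first exact: (hF k n).1.
    by apply/seteqP; split => y /=; rewrite asboolE.
  have cPk : continuous (fun t : cantor_space => Phi t k).
    move=> t; apply: (@continuous_comp _ _ _ Phi (fun f => f k) t (cPhi t)).
    exact: proj_continuous.
  exact: ((continuousP _).1 cPk V0 hO).
move=> gamma' _; rewrite /team_cost; apply: le_int_ge0 => omega; first exact: c_ge0.
rewrite hta; have [t <-] := sPhi (team_action eta gamma' omega).
change (g (w0 omega, z (w0 omega)) <= g (w0 omega, t))%E.
rewrite /z zsel_opt //; exact: msel_lb.
Qed.
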